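(* Let $m\ge 1$ and $n\geq 3m+1$ be integers, and let $p,q$ be real numbers with $0<p\leq q$ and $0<p+q<1$. Then the minimum discrepancy of $C_{n,m}$ equals $$\delta(C_{n,m})=\min\{m^2,\ (1+\gamma)m\},$$ where $\gamma=\gamma_{p,q}=\log_{\frac{q}{1-p}}\left(\frac{p}{1-q}\right)$.
   Context: For integers $n\geq 2$, $N=\binom{n}{2}$ and $1\leq m\leq n$, the community code $C_{n,m}\subseteq\mathbb{F}_2^N$ consists of exactly those binary vectors of length $N$ that are the upper-triangular (off-diagonal) part of the adjacency matrix of a simple undirected graph on the labeled vertex set $\{1,\ldots,n\}$ which is a disjoint union of cliques, each clique having at least $m$ vertices. For $\mathbf{x},\mathbf{y}\in\mathbb{F}_2^N$ and $a,b\in\mathbb{F}_2$ let $d_{ab}(\mathbf{y},\mathbf{x})=|\{i: y_i=a,\ x_i=b\}|$. The discrepancy is $\delta(\mathbf{y},\mathbf{x})=\gamma\, d_{10}(\mathbf{y},\mathbf{x})+d_{01}(\mathbf{y},\mathbf{x})$ with $\gamma=\log_{\frac{q}{1-p}}\left(\frac{p}{1-q}\right)$. The minimum discrepancy $\delta(C)$ of a code $C$ is the minimum of $\delta(\mathbf{y},\mathbf{x})$ over all ordered pairs of distinct codewords $\mathbf{x},\mathbf{y}\in C$. *)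

(* Defs.v *)
From HB Require Import structures.
From mathcomp Require Import all_boot all_order all_algebra.
From mathcomp Require Import reals exp.
Set Implicit Arguments. Unset Strict Implicit. Unset Printing Implicit Defensive.
Import Order.TTheory GRing.Theory Num.Theory.
Local Open Scope ring_scope.

(* Coordinates of F_2^N, N = binom(n,2): the off-diagonal upper-triangular
   positions (i,j), i < j, of an n x n adjacency matrix. *)
Definition pos (n : nat) := {ij : 'I_n * 'I_n | (ij.1 < ij.2)%N}.

Definition word (n : nat) := {ffun pos n -> bool}.

(* x is the upper-triangular part of the adjacency matrix of a graph on
   {1..n} which is a disjoint union of cliques, each with >= m vertices:
   the cliques form a partition P of the vertex set, and i~j iff i and j
   lie in the same block. *)
Definition community_code (n m : nat) (x : word n) : Prop :=
  exists P : {set {set 'I_n}},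
    [/\ partition P [set: 'I_n],
        (forall B, B \in P -> (m <= #|B|)%N) &
        (forall ij : pos n,
            x ij = (pblock P (val ij).1 == pblock P (val ij).2))].

Arguments community_code : clear implicits.

Definition dab (n : nat) (y x : word n) (a b : bool) : nat :=
  #|[set i : pos n | (y i == a) && (x i == b)]|.

Section Reals.
Variable R : realType.

Definition gamma (p q : R) : R := ln (p / (1 - q)) / ln (q / (1 - p)).

Definition discrepancy (p q : R) (n : nat) (y x : word n) : R :=
  gamma p q * (dab y x true false)%:R + (dab y x false true)%:R.

Definition is_min_discrepancy (p q : R) (n : nat) (C : word n -> Prop) (v : R)
  : Prop :=
  (exists x y, [/\ C x, C y, x != y & discrepancy p q y x = v]) /\
  (forall x y, C x -> C y -> x != y -> v <= discrepancy p q y x).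
End Reals.

(* Main.v *)
Require Import Defs.
From HB Require Import structures.
From mathcomp Require Import all_boot all_order all_algebra.
From mathcomp Require Import reals exp.
From mathcomp Require Import zify ring lra.
Definition blockfun n m (X : 'I_n -> {set 'I_n}) :=
  [/\ forall i, i \in X i,
      forall i j, (j \in X i) = (X i == X j) &
      forall i, m <= #|X i|].

Section BF.
Lemma bf_eq {n m X} i j : @blockfun n m X -> j \in X i -> X j = X i.
Proof. by case=> _ h _ /[!h] /eqP. Qed.

Lemma bf_sym {n m X} i j : @blockfun n m X -> (j \in X i) = (i \in X j).
Proof. by case=> _ h _; rewrite !h eq_sym. Qed.

Lemma bf_disj {n m X} i j k : @blockfun n m X -> k \in X i -> k \in X j -> X i = X j.
Proof. by move=> b ki kj; rewrite -(bf_eq _ _ b ki) (bf_eq _ _ b kj). Qed.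
End BF.

Definition bsum {n} (X Y : 'I_n -> {set 'I_n}) := \sum_i #|X i :\: Y i|.

Lemma bad_sum {n m X Y i j} : @blockfun n m X -> @blockfun n m Y ->
  j \in Y i -> j \notin X i ->
  2 * (#|Y i| - 1) <= \sum_(u in Y i) #|Y u :\: X u|.
Proof.
move=> bX bY jY jX.
have iY : i \in Y i by case: bY.
have iX : i \in X i by case: bX.
rewrite (big_setID (X i)) /=.
have h1 : \sum_(u in Y i :&: X i) #|Y u :\: X u| = #|Y i :&: X i| * #|Y i :\: X i|.
  rewrite -sum_nat_const; apply: eq_bigr => u /setIP [uY uX].
  by rewrite (bf_eq _ _ bY uY) (bf_eq _ _ bX uX).
have h2 : #|Y i :\: X i| * #|Y i :&: X i| <= \sum_(u in Y i :\: X i) #|Y u :\: X u|.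
  rewrite -sum_nat_const; apply: leq_sum => u /setDP [uY uX].
  rewrite (bf_eq _ _ bY uY); apply: subset_leq_card; apply/subsetP => k /setIP [kY kX].
  rewrite in_setD kY andbT; apply/negP => kXu.
  by move: uX; rewrite (bf_sym _ _ bX) -(bf_disj _ _ _ bX kX kXu) iX.
rewrite h1.
have c1 : 0 < #|Y i :&: X i| by apply/card_gt0P; exists i; rewrite inE iY iX.
have c2 : 0 < #|Y i :\: X i| by apply/card_gt0P; exists j; rewrite inE jY jX.
have := cardsID (X i) (Y i).
move: h2 c1 c2; set a := #|_ :&: _|; set b := #|_ :\: _|; set s := \sum_(_ in _) _.
move=> h2 c1 c2 e. rewrite -e. nia.
Qed.

Lemma sum_disj2 {n} (F : 'I_n -> nat) (A B : {set 'I_n}) :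
  (forall i, i \in B -> i \notin A) ->
  \sum_(i in A) F i + \sum_(i in B) F i <= \sum_i F i.
Proof.
move=> dAB.
rewrite [X in _ <= X](bigID (mem A)) /= leq_add2l.
rewrite [X in _ <= X](bigID (mem B)) /=.
apply: leq_trans (leq_addr _ _).
rewrite [X in X <= _](eq_bigl (fun i => (i \notin A) && (i \in B))) //.
move=> i; case iB: (i \in B); last by rewrite andbF.
by rewrite andbT (dAB _ iB).
Qed.

Lemma sum_split {n} (F : 'I_n -> nat) (A : {set 'I_n}) :
  \sum_i F i = \sum_(i in A) F i + \sum_(i in ~: A) F i.
Proof.
rewrite (bigID (mem A)) /=; congr (_ + _).
by apply: eq_bigl => i; rewrite inE.
Qed.

Lemma card_sumE n (A : {set 'I_n}) : #|A| = \sum_k (k \in A : nat).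
Proof. by rewrite -sum1_card big_mkcond /=; apply: eq_bigr => k _; case: (k \in A). Qed.

Lemma dcount {n m X} (Q : {set 'I_n}) : @blockfun n m X ->
  \sum_(t in ~: Q) #|X t :&: Q| = \sum_(s in Q) #|X s :\: Q|.
Proof.
move=> bX.
rewrite big_mkcond [RHS]big_mkcond /=.
transitivity (\sum_t \sum_s ((t \notin Q) && (s \in X t) && (s \in Q) : nat)).
  apply: eq_bigr => t _; rewrite inE card_sumE; case: (t \in Q) => /=.
    by rewrite big1.
  by apply: eq_bigr => s _; rewrite inE.
rewrite exchange_big /=; apply: eq_bigr => s _; rewrite card_sumE.
case sQ: (s \in Q) => /=.
  apply: eq_bigr => t _; rewrite !inE (bf_sym s t bX).
  by rewrite andbT.
by rewrite big1 // => t _; rewrite andbF.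
Qed.

Lemma main_L {n m X Y} : @blockfun n m X -> @blockfun n m Y ->
  bsum Y X < 2 * m -> (exists i, X i != Y i) -> 2 * (m * m) <= bsum X Y.
Proof.
move=> bX bY hB [i0 ne0].
have mX : forall s, m <= #|X s| by case: bX.
have mY : forall s, m <= #|Y s| by case: bY.
have rX : forall s, s \in X s by case: bX.
have rY : forall s, s \in Y s by case: bY.
rewrite /bsum in hB *.
case: (boolP [exists i, ~~ (Y i \subset X i)]).
- move/existsP => [i /subsetPn [j jY jX]].
  set Q := Y i.
  have hQ := bad_sum bX bY jY jX; rewrite -/Q in hQ.
  have sQ := sum_split (fun u => #|Y u :\: X u|) Q; rewrite /= in sQ.
  have le1 : \sum_(u in Q) #|Y u :\: X u| <= \sum_i #|Y i :\: X i| by rewrite sQ leq_addr.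
  have NQ : #|Q| = m. have := mY i. rewrite -/Q. move: hQ hB le1. clear. move: (#|Q|) => a. move: (\sum_(i in Q) _) => b. move: (\sum_i _) => c. lia.
  have ij : i != j by apply/eqP => e; move: jX; rewrite -e rX.
  have m2 : 2 <= m.
    rewrite -NQ; have <- : #|[set i; j]| = 2 by rewrite cards2 ij.
    by apply: subset_leq_card; apply/subsetP => k; rewrite !inE => /orP [] /eqP ->.
  have key : forall s, s \in Q -> m <= #|X s :\: Q|.
    move=> s sQs.
  have [jj jjQ jjX] : exists2 jj, jj \in Q & jj \notin X s.
      case: (boolP (X s == X i)) => [/eqP -> | nei]; first by exists j.
      by exists i => //; apply/negP => iXs; move: nei; rewrite (bf_eq _ _ bX iXs) eqxx.
    have lt1 : #|X s :&: Q| < m.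
      rewrite -NQ (cardsD1 jj Q) jjQ add1n ltnS; apply: subset_leq_card.
      apply/subsetP => k; rewrite !inE => /andP [kX kQ]; rewrite kQ andbT.
      by apply/eqP => e; move: jjX; rewrite -e kX.
    have := cardsID Q (X s); have := mX s => h1 h2.
    have : 0 < #|X s :\: Q| by lia.
    move/card_gt0P => [t]; rewrite inE => /andP [tQ tX].
    case: (boolP (Y t \subset X t)) => [sub | /subsetPn [j2 j2Y j2X]].
      apply: leq_trans (mY t) _; apply: subset_leq_card; apply/subsetP => k kY.
      rewrite inE -(bf_eq _ _ bX tX) (subsetP sub _ kY) andbT.
      by apply/negP => kQ; rewrite /Q -(bf_disj _ _ _ bY kY kQ) rY in tQ.
    have hT := bad_sum bX bY j2Y j2X.
    have := @sum_disj2 _ (fun u => #|Y u :\: X u|) Q (Y t).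
    have dj : forall u, u \in Y t -> u \notin Q.
      move=> u uY; by apply/negP => uQ; rewrite /Q -(bf_disj _ _ _ bY uY uQ) rY in tQ.
    move/(_ dj) => h3.
    have := mY t; lia.
  have hA1 : m * m <= \sum_(s in Q) #|X s :\: Y s|.
    rewrite -{1}NQ -sum_nat_const; apply: leq_sum => s sQs.
    by rewrite (bf_eq _ _ bY sQs); apply: key.
  have hA2 : m * m <= \sum_(t in ~: Q) #|X t :\: Y t|.
    apply: (leq_trans hA1); rewrite (eq_bigr (fun s => #|X s :\: Q|)); last first.
      by move=> s sQs; rewrite (bf_eq _ _ bY sQs).
    rewrite -(dcount Q bX); apply: leq_sum => t; rewrite inE => tQ.
    apply: subset_leq_card; apply/subsetP => k; rewrite !inE => /andP [kX kQ].
    rewrite kX andbT; by apply/negP => kY; rewrite /Q -(bf_disj _ _ _ bY kY kQ) rY in tQ.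
  rewrite (sum_split _ Q); lia.
- rewrite negb_exists => /forallP hall.
  have sub : forall s, Y s \subset X s by move=> s; have := hall s; rewrite negbK.
  have [j jX jY] : exists2 j, j \in X i0 & j \notin Y i0.
    apply/exists_inP; rewrite -negb_forall_in; apply/negP => /forall_inP h.
    move: ne0; rewrite eqEsubset sub andbT; apply/negP/negPn/subsetP => k kX.
    exact: h.
  have eXj : X j = X i0 by apply: bf_eq bX jX.
  have dj : forall u, u \in Y j -> u \notin Y i0.
    move=> u uj; by apply/negP => ui; rewrite -(bf_disj _ _ _ bY uj ui) rY in jY.
  have h1 : m * m <= \sum_(s in Y i0) #|X s :\: Y s|.
    apply: leq_trans (leq_mul (mY i0) (leqnn m)) _; rewrite -sum_nat_const; apply: leq_sum => s sY.
    rewrite (bf_eq _ _ bY sY) (bf_eq _ _ bX (subsetP (sub _) _ sY)).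
    apply: leq_trans (mY j) _; apply: subset_leq_card; apply/subsetP => k kj.
    by rewrite inE (dj _ kj) -eXj (subsetP (sub _) _ kj).
  have h2 : m * m <= \sum_(s in Y j) #|X s :\: Y s|.
    apply: leq_trans (leq_mul (mY j) (leqnn m)) _; rewrite -sum_nat_const; apply: leq_sum => s sY.
    rewrite (bf_eq _ _ bY sY) (bf_eq _ _ bX (subsetP (sub _) _ sY)).
    apply: leq_trans (mY i0) _; apply: subset_leq_card; apply/subsetP => k ki.
    rewrite inE eXj (subsetP (sub _) _ ki) andbT; apply/negP => kj.
    by move: (dj _ kj); rewrite ki.
  have := @sum_disj2 _ (fun u => #|X u :\: Y u|) _ _ dj; lia.
Qed.

Lemma card_sumE' (T : finType) (A : {set T}) : #|A| = \sum_k (k \in A : nat).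
Proof. by rewrite -sum1_card big_mkcond /=; apply: eq_bigr => k _; case: (k \in A). Qed.

Lemma bridge n (g : rel 'I_n) : (forall i j, g i j = g j i) -> (forall i, g i i = false) ->
  #|[set k : pos n | g (val k).1 (val k).2]| * 2 = \sum_i #|[set j | g i j]|.
Proof.
move=> gs gi.
have e1 : #|[set k : pos n | g (val k).1 (val k).2]| =
          #|[set ij : 'I_n * 'I_n | (ij.1 < ij.2) && g ij.1 ij.2]|.
  rewrite -(card_imset _ val_inj); apply: eq_card => ij; rewrite inE.
  apply/imsetP/idP => [[k]|/andP [lt gij]].
    by rewrite inE => gk ->; rewrite gk andbT; apply: (svalP k).
  by exists (exist _ ij lt) => //; rewrite inE.
have e2 : \sum_i #|[set j | g i j]| =
   \sum_(i : 'I_n) \sum_(j : 'I_n) ((i < j) && g i j : nat) + \sum_(i : 'I_n) \sum_(j : 'I_n) ((j < i) && g i j : nat).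
  rewrite -big_split /=; apply: eq_bigr => i _; rewrite card_sumE' -big_split /=.
  apply: eq_bigr => j _; rewrite inE.
  case: (ltngtP i j) => e /=; rewrite ?addn0 ?add0n //; by rewrite (ord_inj e) gi.
have e3 : \sum_(i : 'I_n) \sum_(j : 'I_n) ((j < i) && g i j : nat) = \sum_(i : 'I_n) \sum_(j : 'I_n) ((i < j) && g i j : nat).
  by rewrite exchange_big /=; apply: eq_bigr => i _; apply: eq_bigr => j _; rewrite gs.
rewrite e2 e3 e1 card_sumE' muln2 -addnn; congr (_ + _);
  by rewrite pair_big /=; apply: eq_bigr => ij _; rewrite inE.
Qed.

Lemma code_bf {n m x} : community_code n m x ->
  exists X, @blockfun n m X /\ forall k : pos n, x k = (X (val k).1 == X (val k).2).
Proof.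
case=> P [hP hB hx]; move: hP => /and3P [/eqP cov triv _].
have cv : forall i, i \in cover P by move=> i; rewrite cov inE.
exists (pblock P); split => //; split.
- by move=> i; rewrite mem_pblock.
- by move=> i j; rewrite eq_pblock.
- by move=> i; apply: hB; apply: pblock_mem.
Qed.

Lemma dabE {n m} {x y : word n} {X Y} : @blockfun n m X -> @blockfun n m Y ->
  (forall k : pos n, x k = (X (val k).1 == X (val k).2)) ->
  (forall k : pos n, y k = (Y (val k).1 == Y (val k).2)) ->
  dab y x false true * 2 = bsum X Y.
Proof.
move=> bX bY hx hy.
have hXs := bf_sym _ _ bX; have hYs := bf_sym _ _ bY.
have [rX eX _] := bX; have [rY eY _] := bY.
rewrite /dab (eq_card (B := [set k : pos n | (fun i j => (j \in X i) && (j \notin Y i)) (val k).1 (val k).2])).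
  rewrite (@bridge n (fun i j => (j \in X i) && (j \notin Y i))) /bsum.
  - by apply: eq_bigr => i _; apply: eq_card => j; rewrite !inE andbC.
  - by move=> i j /=; rewrite hXs hYs.
  - by move=> i /=; rewrite rY andbF.
by move=> k; rewrite !inE hx hy eX eY; case: (X _ == X _); case: (Y _ == Y _).
Qed.

Lemma dab_swap n (x y : word n) : dab y x true false = dab x y false true.
Proof. by apply: eq_card => k; rewrite !inE andbC. Qed.

Lemma neq_bf {n m} {x y : word n} {X Y} : @blockfun n m X -> @blockfun n m Y ->
  (forall k : pos n, x k = (X (val k).1 == X (val k).2)) ->
  (forall k : pos n, y k = (Y (val k).1 == Y (val k).2)) ->
  x != y -> exists i, X i != Y i.
Proof.
move=> bX bY hx hy ne.
case: (boolP [exists i, X i != Y i]) => [/existsP //|].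
rewrite negb_exists => /forallP h; suff exy : x = y by rewrite exy eqxx in ne.
apply/ffunP => k.
have [_ eX _] := bX; have [_ eY _] := bY.
rewrite hx hy -eX -eY.
by have := h (val k).1; rewrite negbK => /eqP ->.
Qed.

Lemma lower_nat {n m} {x y : word n} : community_code n m x -> community_code n m y -> x != y ->
  (dab y x true false < m -> m * m <= dab y x false true) /\
  (dab y x false true < m -> m * m <= dab y x true false).
Proof.
move=> /code_bf [X [bX hx]] /code_bf [Y [bY hy]] ne.
have A := dabE bX bY hx hy.
have B := dabE bY bX hy hx; rewrite -dab_swap in B.
have [i0 hi0] := neq_bf bX bY hx hy ne.
have L1 := main_L bX bY; have L2 := main_L bY bX.
rewrite -A -B in L1 L2; split => h.
- have := L1 ltac:(lia) (ex_intro _ i0 hi0); lia.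
- have hi1 : Y i0 != X i0 by rewrite eq_sym.
  have := L2 ltac:(lia) (ex_intro _ i0 hi1); lia.
Qed.

Lemma sum4 n b1 b2 b3 (F : nat -> nat) c1 c2 c3 c4 :
  b1 <= b2 -> b2 <= b3 -> b3 <= n ->
  (forall j, j < b1 -> F j = c1) -> (forall j, b1 <= j < b2 -> F j = c2) ->
  (forall j, b2 <= j < b3 -> F j = c3) -> (forall j, b3 <= j < n -> F j = c4) ->
  \sum_(0 <= j < n) F j = b1 * c1 + (b2 - b1) * c2 + (b3 - b2) * c3 + (n - b3) * c4.
Proof.
move=> h1 h2 h3 e1 e2 e3 e4.
have s1 : \sum_(0 <= j < b1) F j = b1 * c1.
  by rewrite -{2}(subn0 b1) -sum_nat_const_nat; apply: eq_big_nat => j /andP [_ ?]; apply: e1.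
have s2 : \sum_(b1 <= j < b2) F j = (b2 - b1) * c2.
  by rewrite -sum_nat_const_nat; apply: eq_big_nat => j ?; apply: e2.
have s3 : \sum_(b2 <= j < b3) F j = (b3 - b2) * c3.
  by rewrite -sum_nat_const_nat; apply: eq_big_nat => j ?; apply: e3.
have s4 : \sum_(b3 <= j < n) F j = (n - b3) * c4.
  by rewrite -sum_nat_const_nat; apply: eq_big_nat => j ?; apply: e4.
rewrite (big_cat_nat _ (n := b3)) ?(leq_trans h1 h2) //= (big_cat_nat _ (n := b2)) ?(leq_trans h1 h2) //=.
by rewrite (big_cat_nat _ (n := b1)) //= s1 s2 s3 s4.
Qed.

Lemma cardP n (A : {set 'I_n}) (Pn : pred nat) :
  (forall j : 'I_n, (j \in A) = Pn j) -> #|A| = \sum_(0 <= j < n) Pn j.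
Proof.
move=> h; rewrite card_sumE' big_mkord; apply: eq_bigr => j _; by rewrite h.
Qed.

Lemma sumI {n} (F : nat -> nat) : \sum_(i < n) F i = \sum_(0 <= i < n) F i.
Proof. by rewrite big_mkord. Qed.

Ltac crush := rewrite /=; repeat (match goal with |- context [if ?b then _ else _] => case: (boolP b) => ? end); rewrite /= ?eqxx; try lia.

Definition blk {n} (f : nat -> nat) (i : 'I_n) : {set 'I_n} := [set j : 'I_n | f i == f j].
Definition wordf n (f : nat -> nat) : word n := [ffun k : pos n => f (val k).1 == f (val k).2].

Section C1.
Definition f1x m j := if j < 2 * m then 0 else 1.
Definition f1y m j := if j < m then 0 else if j < 2 * m then 1 else 2.

Lemma c1_a n m (i : 'I_n) : 0 < m -> 3 * m + 1 <= n ->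
  #|blk (f1x m) i :\: blk (f1y m) i| = if i < 2 * m then m else 0.
Proof.
move=> m0 hn.
rewrite (@cardP _ _ (fun j => (f1x m i == f1x m j) && (f1y m i != f1y m j))); last first.
  by move=> j; rewrite !inE andbC.
rewrite (@sum4 n m (2 * m) (2 * m) _ (if i < m then 0 else if i < 2 * m then 1 else 0)
   (if i < m then 1 else 0) 0 0).
all: rewrite /f1x /f1y; try (move=> j hj); crush.
Qed.
End C1.

Lemma blk_bf {n m f} : (forall i : 'I_n, m <= #|blk f i|) -> blockfun n m (@blk n f).
Proof.
move=> hm; split => //.
- by move=> i; rewrite inE.
- move=> i j; rewrite inE; apply/idP/idP => [/eqP e|/eqP/setP/(_ j)].
    by apply/eqP/setP => k; rewrite !inE e.
  by rewrite !inE eqxx => ->.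
Qed.

Lemma wordfE {n} (f : nat -> nat) (k : pos n) :
  wordf n f k = (blk f (val k).1 == blk f (val k).2).
Proof.
rewrite ffunE; apply/idP/idP => [/eqP e|/eqP e].
  by apply/eqP/setP => j; rewrite !inE e.
by move: e => /setP /(_ (val k).2); rewrite !inE eqxx => ->.
Qed.

Lemma code_f {n m} {f : nat -> nat} : (forall i : 'I_n, m <= #|blk f i|) ->
  community_code n m (wordf n f).
Proof.
move=> hm.
have hP := preim_partitionP (fun i : 'I_n => f i) setT.
have triv : trivIset (preim_partition (fun i : 'I_n => f i) setT) by case/and3P: hP.
have hB : forall i : 'I_n, pblock (preim_partition (fun i : 'I_n => f i) setT) i = blk f i.
  move=> i; apply: def_pblock => //.
    apply/imsetP; exists i => //; apply/setP => j; by rewrite !inE.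
  by rewrite inE.
exists (preim_partition (fun i : 'I_n => f i) setT); split => //.
- move=> B /imsetP [i _ ->].
  by apply: leq_trans (hm i) _; apply: subset_leq_card; apply/subsetP => j; rewrite !inE.
- by move=> k; rewrite wordfE !hB.
Qed.

Definition mkpos {n} {i j : 'I_n} (h : i < j) : pos n := exist (fun ij : 'I_n * 'I_n => ij.1 < ij.2) (i, j) h.

Lemma neq_words n (x y : word n) (k : pos n) : x k != y k -> x != y.
Proof. by apply: contraNN => /eqP ->. Qed.

Lemma constr1 {n m} : 0 < m -> 3 * m + 1 <= n ->
  [/\ community_code n m (wordf n (f1x m)), community_code n m (wordf n (f1y m)),
      wordf n (f1x m) != wordf n (f1y m),
      dab (wordf n (f1y m)) (wordf n (f1x m)) true false = 0 &
      dab (wordf n (f1y m)) (wordf n (f1x m)) false true = m * m].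
Proof.
move=> m0 hn.
have sx : forall i : 'I_n, m <= #|blk (f1x m) i|.
  move=> i; rewrite (@cardP _ _ (fun j => f1x m i == f1x m j)); last by move=> j; rewrite inE.
  rewrite (@sum4 n m (2 * m) (2 * m) _ (if i < 2 * m then 1 else 0) (if i < 2 * m then 1 else 0) 0
     (if i < 2 * m then 0 else 1)).
  all: rewrite /f1x; try (move=> j hj); crush.
have sy : forall i : 'I_n, m <= #|blk (f1y m) i|.
  move=> i; rewrite (@cardP _ _ (fun j => f1y m i == f1y m j)); last by move=> j; rewrite inE.
  rewrite (@sum4 n m (2 * m) (2 * m) _ (if i < m then 1 else 0)
     (if i < m then 0 else if i < 2 * m then 1 else 0) 0
     (if i < 2 * m then 0 else 1)).
  all: rewrite /f1y; try (move=> j hj); crush.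
have bX := blk_bf sx; have bY := blk_bf sy.
have hx := @wordfE n (f1x m); have hy := @wordfE n (f1y m).
have A := dabE bX bY hx hy.
have B := dabE bY bX hy hx; rewrite -dab_swap in B.
have i0 : 0 < n by lia.
have im : m < n by lia.
have k0 : Ordinal i0 < Ordinal im by [].
split.
- exact: code_f sx.
- exact: code_f sy.
- apply: (@neq_words n _ _ (mkpos k0)); rewrite !ffunE /= /f1x /f1y; crush.
- have : bsum (blk (f1y m)) (@blk n (f1x m)) = 0.
    apply: big1 => i _; apply/eqP; rewrite cards_eq0; apply/eqP/setP => j.
    rewrite !inE /f1x /f1y; crush.
  move=> h; move: B; rewrite h => /eqP; rewrite muln_eq0 orbF => /eqP e; exact: e.
- have : bsum (@blk n (f1x m)) (blk (f1y m)) = m * m + m * m.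
    rewrite /bsum (eq_bigr _ (fun (i : 'I_n) _ => @c1_a n m i m0 hn)).
    rewrite (sumI (fun i => if i < 2 * m then m else 0)).
    rewrite (@sum4 n m (2 * m) (2 * m) _ m m 0 0).
    all: try (move=> j hj); crush.
  move=> h; move: A; rewrite h -mulnDr => e. have e2 : dab (wordf n (f1y m)) (wordf n (f1x m)) false true = m * m by lia. exact: e2.
Qed.

Definition f2x m j := if j < m.+1 then 0 else if j < (2 * m).+1 then 1 else 2.
Definition f2y m j := if j < 1 then 1 else f2x m j.

Lemma c2_a n m (i : 'I_n) : 0 < m -> 3 * m + 1 <= n ->
  #|blk (f2x m) i :\: blk (f2y m) i| = if i < 1 then m else if i < m.+1 then 1 else 0.
Proof.
move=> m0 hn.
rewrite (@cardP _ _ (fun j => (f2x m i == f2x m j) && (f2y m i != f2y m j))); last first.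
  by move=> j; rewrite !inE andbC.
rewrite (@sum4 n 1 m.+1 (2 * m).+1 _ (if i < 1 then 0 else if i < m.+1 then 1 else 0)
   (if i < 1 then 1 else 0) 0 0).
all: rewrite /f2y /f2x; try (move=> j hj); crush.
Qed.

Lemma c2_b n m (i : 'I_n) : 0 < m -> 3 * m + 1 <= n ->
  #|blk (f2y m) i :\: blk (f2x m) i| =
    if i < 1 then m else if i < m.+1 then 0 else if i < (2 * m).+1 then 1 else 0.
Proof.
move=> m0 hn.
rewrite (@cardP _ _ (fun j => (f2y m i == f2y m j) && (f2x m i != f2x m j))); last first.
  by move=> j; rewrite !inE andbC.
rewrite (@sum4 n 1 m.+1 (2 * m).+1 _
   (if i < 1 then 0 else if i < m.+1 then 0 else if i < (2 * m).+1 then 1 else 0)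
   0 (if i < 1 then 1 else 0) 0).
all: rewrite /f2y /f2x; try (move=> j hj); crush.
Qed.

Lemma constr2 {n m} : 0 < m -> 3 * m + 1 <= n ->
  [/\ community_code n m (wordf n (f2x m)), community_code n m (wordf n (f2y m)),
      wordf n (f2x m) != wordf n (f2y m),
      dab (wordf n (f2y m)) (wordf n (f2x m)) true false = m &
      dab (wordf n (f2y m)) (wordf n (f2x m)) false true = m].
Proof.
move=> m0 hn.
have sx : forall i : 'I_n, m <= #|blk (f2x m) i|.
  move=> i; rewrite (@cardP _ _ (fun j => f2x m i == f2x m j)); last by move=> j; rewrite inE.
  rewrite (@sum4 n 1 m.+1 (2 * m).+1 _ (if i < m.+1 then 1 else 0) (if i < m.+1 then 1 else 0)
     (if i < m.+1 then 0 else if i < (2 * m).+1 then 1 else 0)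
     (if i < (2 * m).+1 then 0 else 1)).
  all: rewrite /f2x; try (move=> j hj); crush.
have sy : forall i : 'I_n, m <= #|blk (f2y m) i|.
  move=> i; rewrite (@cardP _ _ (fun j => f2y m i == f2y m j)); last by move=> j; rewrite inE.
  rewrite (@sum4 n 1 m.+1 (2 * m).+1 _
     (if i < 1 then 1 else if i < m.+1 then 0 else if i < (2 * m).+1 then 1 else 0)
     (if i < 1 then 0 else if i < m.+1 then 1 else 0)
     (if i < 1 then 1 else if i < m.+1 then 0 else if i < (2 * m).+1 then 1 else 0)
     (if i < (2 * m).+1 then 0 else 1)).
  all: rewrite /f2y /f2x; try (move=> j hj); crush.
have bX := blk_bf sx; have bY := blk_bf sy.
have hx := @wordfE n (f2x m); have hy := @wordfE n (f2y m).
have A := dabE bX bY hx hy.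
have B := dabE bY bX hy hx; rewrite -dab_swap in B.
have i0 : 0 < n by lia.
have i1 : 1 < n by lia.
have k0 : Ordinal i0 < Ordinal i1 by [].
split.
- exact: code_f sx.
- exact: code_f sy.
- apply: (@neq_words n _ _ (mkpos k0)); rewrite !ffunE /= /f2x /f2y; crush.
- have : bsum (blk (f2y m)) (@blk n (f2x m)) = m + m.
    rewrite /bsum (eq_bigr _ (fun (i : 'I_n) _ => @c2_b n m i m0 hn)).
    rewrite (sumI (fun i => if i < 1 then m else if i < m.+1 then 0 else if i < (2 * m).+1 then 1 else 0)).
    rewrite (@sum4 n 1 m.+1 (2 * m).+1 _ m 0 1 0).
    all: try (move=> j hj); crush.
  move=> h; move: B; rewrite h => e.
  have e2 : dab (wordf n (f2y m)) (wordf n (f2x m)) true false = m by lia. exact: e2.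
- have : bsum (@blk n (f2x m)) (blk (f2y m)) = m + m.
    rewrite /bsum (eq_bigr _ (fun (i : 'I_n) _ => @c2_a n m i m0 hn)).
    rewrite (sumI (fun i => if i < 1 then m else if i < m.+1 then 1 else 0)).
    rewrite (@sum4 n 1 m.+1 m.+1 _ m 1 0 0).
    all: try (move=> j hj); crush.
  move=> h; move: A; rewrite h => e.
  have e2 : dab (wordf n (f2y m)) (wordf n (f2x m)) false true = m by lia. exact: e2.
Qed.
Local Open Scope ring_scope.
Import Order.TTheory GRing.Theory Num.Theory.
Local Open Scope ring_scope.

Lemma gamma_ge1 {R : realType} {p q : R} :
  0 < p -> p <= q -> p + q < 1 -> 1 <= gamma p q.
Proof.
move=> p0 pq pq1.
have q0 : 0 < q by apply: lt_le_trans pq.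
have h1q : 0 < 1 - q by lra.
have h1p : 0 < 1 - p by lra.
have a0 : 0 < p / (1 - q) by apply: divr_gt0.
have b0 : 0 < q / (1 - p) by apply: divr_gt0.
have b1 : q / (1 - p) < 1 by rewrite ltr_pdivrMr //; lra.
have ab : p / (1 - q) <= q / (1 - p).
  rewrite ler_pdivrMr // mulrAC ler_pdivlMr //.
  have : 0 <= (q - p) * (1 - p - q) by apply: mulr_ge0; lra.
  nra.
have lb : ln (q / (1 - p)) < 0 by apply: ln_lt0; rewrite b0 b1.
have la : ln (p / (1 - q)) <= ln (q / (1 - p)) by rewrite ler_ln // posrE.
rewrite /gamma ler_ndivlMr //; lra.
Qed.

Theorem corollary2 (R : realType) (n m : nat) (p q : R) :
  (1 <= m)%N -> (3 * m + 1 <= n)%N ->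
  0 < p -> p <= q -> 0 < p + q -> p + q < 1 ->
  is_min_discrepancy p q (community_code n m)
    (Num.min ((m ^ 2)%N%:R : R) ((1 + gamma p q) * (m%:R : R))).
Proof.
move=> m1 hn p0 pq pq0 pq1.
have g1 := gamma_ge1 p0 pq pq1.
have mm : (m ^ 2)%N%:R = (m%:R * m%:R : R) by rewrite -natrM expnS expn1.
split.
- case: (boolP ((m ^ 2)%N%:R <= (1 + gamma p q) * (m%:R : R))) => h.
  + rewrite min_l //.
    have [c1 c2 ne d1 d2] := constr1 (n:=n) (m:=m) m1 hn.
    exists (wordf n (f1x m)), (wordf n (f1y m)); split => //.
    by rewrite /discrepancy d1 d2 mulr0 add0r expnS expn1.
  + rewrite min_r; last by apply: ltW; rewrite ltNge.
    have [c1 c2 ne d1 d2] := constr2 (n:=n) (m:=m) m1 hn.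
    exists (wordf n (f2x m)), (wordf n (f2y m)); split => //.
    by rewrite /discrepancy d1 d2 mulrDl mul1r addrC.
- move=> x y cx cy ne.
  have [L1 L2] := lower_nat cx cy ne.
  rewrite /discrepancy ge_min.
  move: L1 L2; set d10 := dab y x true false; set d01 := dab y x false true => L1 L2.
  have d10p : (0 : R) <= d10%:R by [].
  case: (ltnP d10 m) => h1.
    have h := L1 h1; apply/orP; left.
    suff : (m ^ 2)%N%:R <= d01%:R :> R by move=> hh; nra.
    by rewrite ler_nat expnS expn1.
  case: (ltnP d01 m) => h2.
    have h := L2 h2; apply/orP; left.
    suff : (m ^ 2)%N%:R <= d10%:R :> R by move=> hh; have : (0 : R) <= d01%:R by []; nra.
    by rewrite ler_nat expnS expn1.
  apply/orP; right.
  have e1 : (m%:R : R) <= d10%:R by rewrite ler_nat.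
  have e2 : (m%:R : R) <= d01%:R by rewrite ler_nat.
  nra.
Qed.
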